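(* Let $N\ge1$ and let $P_N$ be as in the context. For every $t\in(0,\pi)$ with $t\ne\frac{2\pi}{N+2}$, writing $c=\cos\frac{2\pi}{N+2}$, $$ 4|P_N(e^{it})|^2=\left(\frac{\cos\frac{(N+2)t}{2}}{\cos t-c}+\frac{2}{N+2}\cdot\frac{1-c}{1-\cos t}\cdot\frac{\sin t}{(\cos t-c)^2}\,\sin\frac{(N+2)t}{2}\right)^2+\left(\frac{\sin\frac{(N+2)t}{2}}{\cos t-c}\right)^2. $$
   Context: For an integer $N\ge1$ put, for $k=1,\dots,N$, $$b_k=\frac{(N-k+3)\sin\frac{(k+1)\pi}{N+2}-(N-k+1)\sin\frac{(k-1)\pi}{N+2}}{(N+2)\sin\frac{\pi}{N+2}},$$ and define $P_N(z)=\frac{1}{\sin\frac{2\pi}{N+2}}\sum_{k=1}^N b_k\sin\frac{k\pi}{N+2}\,z^k$ (so $P_N(0)=0$, $P_N'(0)=1$). *)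

(* Defs.v *)
From Stdlib Require Import Reals Lra.
Open Scope R_scope.

Definition bcoef (N k : nat) : R :=
  let M := INR N + 2 in
  let K := INR k in
  ((M - K + 1) * sin ((K + 1) * PI / M) - (M - K - 1) * sin ((K - 1) * PI / M))
  / (M * sin (PI / M)).

(* coefficient of z^k in P_N *)
Definition pcoef (N k : nat) : R :=
  let M := INR N + 2 in
  / sin (2 * PI / M) * (bcoef N k * sin (INR k * PI / M)).

(* P_N(e^{it}) = ReP + i ImP, coefficients being real:
   ReP = sum_{k=1}^N pcoef k cos(kt), ImP = sum_{k=1}^N pcoef k sin(kt). *)
Definition P_re (N : nat) (t : R) : R :=
  sum_f_R0 (fun j => pcoef N (S j) * cos (INR (S j) * t)) (N - 1).
Definition P_im (N : nat) (t : R) : R :=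
  sum_f_R0 (fun j => pcoef N (S j) * sin (INR (S j) * t)) (N - 1).

Definition P_abs2 (N : nat) (t : R) : R := P_re N t ^ 2 + P_im N t ^ 2.

(* Main.v *)
Require Import Defs.
From Stdlib Require Import Reals Lra Lia.
From Coquelicot Require Import Coquelicot.
Open Scope R_scope.

Section Alg.
Local Open Scope C_scope.

Fixpoint csum (f : nat -> C) (n : nat) : C :=
  match n with O => f O | S n => csum f n + f (S n) end.

Definition ac (M w : C) (k : nat) : C :=
  (2 - (w^k + /w^k)) / (M*(2 - (w + /w))) + (M - RtoC (INR k))*((w^k - /w^k)/(M*(w - /w))).

Definition G (q Q : C) := q*(1-Q)/(1-q).
Definition H (K q Q : C) := (q - (K+1)*q*Q + K*q*q*Q)/((1-q)*(1-q)).
Definition F (M w z Zm Vm K : C) :=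
  /(M*(2-(w+/w))) * (2*G z Zm - G (z*w) (Zm*Vm) - G (z*/w) (Zm*/Vm))
  + /(M*(w - /w)) * (M*(G (z*w) (Zm*Vm) - G (z*/w) (Zm*/Vm)) - H K (z*w) (Zm*Vm) + H K (z*/w) (Zm*/Vm)).

Lemma closed_form (M w z : C) :
  M <> 0 -> w <> 0 -> z <> 0 -> 1 - z <> 0 -> 1 - z*w <> 0 -> w - z <> 0 ->
  2*w - (w*w+1) <> 0 -> w*w - 1 <> 0 ->
  forall n, csum (fun j => ac M w (S j) * z^(S j)) n = F M w z (z^(S n)) (w^(S n)) (RtoC (INR (S n))).
Proof.
  intros HM Hw Hz H1 H2 H3 H4 H5.
  induction n as [|n IH].
  - simpl csum. unfold ac, F, G, H. simpl. rewrite !Cmult_1_r. field. repeat split; auto.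
  - change (csum (fun j => ac M w (S j) * z^(S j)) n + ac M w (S (S n)) * z^(S (S n)) = F M w z (z ^ S (S n)) (w ^ S (S n)) (RtoC (INR (S (S n))))). rewrite IH. unfold ac.
    rewrite (Cpow_S z (S n)), (Cpow_S w (S n)).
    rewrite (S_INR (S n)), RtoC_plus.
    assert (Hv : w^(S n) <> 0) by (apply Cpow_nz; auto).
    assert (Hu : z^(S n) <> 0) by (apply Cpow_nz; auto).
    clear IH. generalize dependent (w^(S n)); generalize (z^(S n)); generalize (RtoC (INR (S n))).
    intros K U V HV. unfold F, G, H. field. repeat split; auto.
Qed.

Lemma final_id (M w z U : C) :
  M <> 0 -> w <> 0 -> z <> 0 -> 1 - z <> 0 -> 1 - z*w <> 0 -> w - z <> 0 ->
  2*w - (w*w+1) <> 0 -> w*w - 1 <> 0 ->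
  2 * F M w z U (/(w*w)) (M - 2) =
  / ((z + /z)/2 - (w + /w)/2)
  + 2 / M * ((1 - (w + /w)/2) / (1 - (z + /z)/2)) * / (((z + /z)/2 - (w + /w)/2) * ((z + /z)/2 - (w + /w)/2))
    * ( - (z - /z) * (U*z*z - 1) / 4).
Proof.
  intros.
  assert (E1 : (z * z + 1) * w - (w * w + 1) * z <> 0).
  { replace ((z * z + 1) * w - (w * w + 1) * z) with ((w - z) * (1 - z*w)) by ring.
    apply Cmult_neq_0; auto. }
  assert (E2 : z * 2 - (z * z + 1) <> 0).
  { replace (z * 2 - (z * z + 1)) with (-((1-z)*(1-z))) by ring.
    intro h. apply (Cmult_neq_0 _ _ H3 H3). transitivity (- (- ((1-z)*(1-z)))). ring. rewrite h. ring. }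
  unfold F, G, H. field. repeat split; auto.
Qed.

End Alg.

Lemma pcoef_eq (N k : nat) : (1 <= N)%nat ->
  pcoef N k = (1 - cos (INR k * (2 * PI / (INR N + 2)))) / ((INR N + 2) * (1 - cos (2 * PI / (INR N + 2))))
              + (INR N + 2 - INR k) / (INR N + 2) * (sin (INR k * (2 * PI / (INR N + 2))) / sin (2 * PI / (INR N + 2))).
Proof.
  intros HN. set (M := INR N + 2). set (phi := 2 * PI / M).
  assert (HM : 3 <= M).
  { unfold M. apply le_INR in HN. simpl in HN. idtac. lra. }
  set (th := PI / M).
  assert (Hth : 0 < th <= PI/3).
  { unfold th; split. apply Rdiv_lt_0_compat; [apply PI_RGT_0|lra].
    apply Rmult_le_compat_l. left; apply PI_RGT_0. apply Rinv_le_contravar; lra. }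
  assert (Hs : sin th <> 0).
  { apply Rgt_not_eq, sin_gt_0; [lra|]. pose proof PI_RGT_0; lra. }
  assert (Hc : cos th <> 0).
  { apply Rgt_not_eq, cos_gt_0; pose proof PI_RGT_0; lra. }
  unfold pcoef, bcoef. fold M.
  replace ((INR k + 1) * PI / M) with (INR k * th + th) by (unfold th; field; lra).
  replace ((INR k - 1) * PI / M) with (INR k * th - th) by (unfold th; field; lra).
  replace (INR k * PI / M) with (INR k * th) by (unfold th; field; lra).
  replace (PI / M) with th by reflexivity.
  replace (2 * PI / M) with (2 * th) by (unfold th; field; lra).
  unfold phi. replace (2 * PI / M) with (2 * th) by (unfold th; field; lra).
  replace (INR k * (2 * th)) with (2 * (INR k * th)) by ring.
  rewrite sin_plus, sin_minus, !sin_2a, !cos_2a_sin.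
  field. repeat split; try lra. intro h. apply Hs. nra.
Qed.

Definition e (x : R) : C := (cos x, sin x).

Lemma Ceq (a b : C) : fst a = fst b -> snd a = snd b -> a = b.
Proof. destruct a, b; simpl; intros; subst; reflexivity. Qed.

Lemma e_add x y : e (x + y) = (e x * e y)%C.
Proof. apply Ceq; unfold e; simpl; [rewrite cos_plus|rewrite sin_plus]; ring. Qed.

Lemma e_opp x : e (- x) = (/ e x)%C.
Proof.
  unfold e, Cinv; simpl. rewrite cos_neg, sin_neg.
  assert (h : cos x ^ 2 + sin x ^ 2 = 1) by (pose proof (sin2_cos2 x); unfold Rsqr in *; lra).
  apply Ceq; simpl; rewrite !Rmult_1_r; replace (cos x * cos x + sin x * sin x) with 1 by nra; field.
Qed.

Lemma e_pow x n : (e x ^ n)%C = e (INR n * x).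
Proof.
  induction n as [|n IH].
  - simpl. apply Ceq; unfold e; simpl; rewrite Rmult_0_l; [rewrite cos_0|rewrite sin_0]; reflexivity.
  - rewrite Cpow_S, IH, <- e_add. f_equal. rewrite S_INR. ring.
Qed.

Lemma e_nz x : e x <> 0%C.
Proof.
  intro h. assert (h1 := f_equal fst h). assert (h2 := f_equal snd h).
  unfold e in *; simpl in *. pose proof (sin2_cos2 x). unfold Rsqr in *. rewrite h1, h2 in *. lra.
Qed.

Lemma cos_C x : RtoC (cos x) = ((e x + / e x) / 2)%C.
Proof.
  rewrite <- e_opp.
  assert (h : (e x + e (-x))%C = RtoC (2 * cos x)).
  { apply Ceq; unfold e; simpl; rewrite ?cos_neg, ?sin_neg; ring. }
  rewrite h, RtoC_mult. field.
Qed.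

Lemma sin_cross x y : (RtoC (sin x) * (e y - / e y))%C = (RtoC (sin y) * (e x - / e x))%C.
Proof.
  rewrite <- !e_opp. apply Ceq; unfold e; simpl; rewrite ?cos_neg, ?sin_neg; ring.
Qed.

Lemma sin_ratio x y : sin y <> 0 -> (e y - / e y)%C <> 0%C ->
  RtoC (sin x / sin y) = ((e x - / e x) / (e y - / e y))%C.
Proof.
  intros h1 h2. rewrite RtoC_div by auto.
  assert (h3 : RtoC (sin y) <> 0%C) by (intro h; apply h1; apply (f_equal fst) in h; exact h).
  assert (h4 : (e y * e y - 1)%C <> 0%C).
  { intro h; apply h2. replace (e y - / e y)%C with ((e y * e y - 1)/ e y)%C by (field; apply e_nz).
    rewrite h. field. apply e_nz. }
  pose proof (e_nz y). pose proof (e_nz x).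
  transitivity (RtoC (sin x) * (e y - / e y) / (RtoC (sin y) * (e y - / e y)))%C.
  { field. repeat split; auto. }
  rewrite sin_cross. field. repeat split; auto.
Qed.

Lemma e_ne1 x : 0 < x < 2 * PI -> (1 - e x)%C <> 0%C.
Proof.
  intros hx h. assert (h1 := f_equal fst h). unfold e in h1; simpl in h1.
  assert (hs : 0 < sin (x/2)) by (apply sin_gt_0; lra).
  replace x with (2 * (x/2)) in h1 by field. rewrite cos_2a_sin in h1. nra.
Qed.

Lemma e_ne1' x : x <> 0 -> - (2 * PI) < x < 2 * PI -> (1 - e x)%C <> 0%C.
Proof.
  intros h0 hx. destruct (Rlt_or_le 0 x) as [hp|hn].
  - apply e_ne1; lra.
  - intro h. apply (e_ne1 (-x)); [lra|]. rewrite e_opp.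
    assert (he : e x = 1%C).
    { transitivity (1 - (1 - e x))%C; [ring|]. rewrite h. ring. }
    rewrite he. field.
Qed.

Lemma csum_fst (g : nat -> C) n : fst (csum g n) = sum_f_R0 (fun j => fst (g j)) n.
Proof. induction n; simpl; [reflexivity| rewrite IHn; reflexivity]. Qed.
Lemma csum_snd (g : nat -> C) n : snd (csum g n) = sum_f_R0 (fun j => snd (g j)) n.
Proof. induction n; simpl; [reflexivity| rewrite IHn; reflexivity]. Qed.
Lemma csum_ext (f g : nat -> C) n : (forall j, f j = g j) -> csum f n = csum g n.
Proof. intro h; induction n; simpl; rewrite ?IHn, h; reflexivity. Qed.

Lemma comps (a b : R) (q : C) :
  fst (RtoC a + RtoC b * q)%C = a + b * fst q /\ snd (RtoC a + RtoC b * q)%C = b * snd q.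
Proof. destruct q; simpl; split; ring. Qed.

Theorem theorem2 (N : nat) (t : R) :
  (1 <= N)%nat ->
  0 < t < PI ->
  t <> 2 * PI / (INR N + 2) ->
  let M := INR N + 2 in
  let c := cos (2 * PI / M) in
  4 * P_abs2 N t =
    (cos (M * t / 2) / (cos t - c)
     + 2 / M * ((1 - c) / (1 - cos t)) * (sin t / (cos t - c) ^ 2) * sin (M * t / 2)) ^ 2
    + (sin (M * t / 2) / (cos t - c)) ^ 2.
Proof.
  intros HN Ht Htp M c.
  pose proof PI_RGT_0 as HPI.
  assert (HM : 3 <= M).
  { unfold M. apply le_INR in HN. simpl in HN. lra. }
  set (phi := 2 * PI / M) in *.
  assert (Hphi : 0 < phi <= 2 * PI / 3).
  { unfold phi; split. apply Rdiv_lt_0_compat; lra.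
    unfold Rdiv. apply Rmult_le_compat_l. lra. apply Rinv_le_contravar; lra. }
  assert (Htphi : t <> phi) by exact Htp.
  assert (Hsphi : sin phi <> 0) by (apply Rgt_not_eq, sin_gt_0; lra).
  assert (Hcphi : 1 - cos phi <> 0).
  { pose proof (cos_decreasing_1 0 phi) as h. rewrite cos_0 in h. assert (cos phi < 1) by (apply h; lra). lra. }
  assert (Hct : 1 - cos t <> 0).
  { pose proof (cos_decreasing_1 0 t) as h. rewrite cos_0 in h. assert (cos t < 1) by (apply h; lra). lra. }
  assert (HD : cos t - c <> 0).
  { intro h. apply Htphi. apply cos_inj; try lra. unfold c in h. fold phi in h. lra. }
  set (z := e t). set (w := e phi).
  assert (Hz : z <> 0%C) by apply e_nz.
  assert (Hw : w <> 0%C) by apply e_nz.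
  assert (Z1 : (1 - z)%C <> 0%C) by (apply e_ne1; lra).
  assert (Z2 : (1 - z*w)%C <> 0%C) by (unfold z, w; rewrite <- e_add; apply e_ne1; lra).
  assert (Z3 : (w - z)%C <> 0%C).
  { replace (w - z)%C with (w * (1 - e (t - phi)))%C.
    - apply Cmult_neq_0; auto. apply e_ne1'; lra.
    - unfold w, z. replace (e t) with (e (phi + (t - phi))) by (f_equal; ring). rewrite e_add. ring. }
  assert (Z4 : (2*w - (w*w+1))%C <> 0%C).
  { replace (2*w - (w*w+1))%C with (-((1-w)*(1-w)))%C by ring. intro h.
    assert (h1 : (1 - w)%C <> 0%C) by (apply e_ne1; lra).
    apply (Cmult_neq_0 _ _ h1 h1). transitivity (-(-((1-w)*(1-w))))%C; [ring|]. rewrite h; ring. }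
  assert (Z5 : (w*w - 1)%C <> 0%C).
  { replace (w*w-1)%C with (-(1 - e (2*phi)))%C.
    - intro h; apply (e_ne1 (2*phi)); [lra|]. transitivity (-(-(1 - e(2*phi))))%C; [ring|]. rewrite h; ring.
    - unfold w. replace (2*phi) with (phi+phi) by ring. rewrite e_add. ring. }
  assert (HMC : RtoC M <> 0%C) by (intro h; apply (f_equal fst) in h; simpl in h; lra).
  assert (Hwk : forall k, (w ^ k)%C <> 0%C) by (intro; apply Cpow_nz; auto).
  assert (Z6 : (e phi - / e phi)%C <> 0%C).
  { fold w. intro h; apply Z5. transitivity ((w - / w) * w)%C; [field; auto|]. rewrite h; ring. }
  assert (Hcoef : forall k, RtoC (pcoef N k) = ac (RtoC M) w k).
  { intro k. rewrite pcoef_eq by auto. fold M phi.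
    rewrite RtoC_plus, RtoC_mult, (sin_ratio (INR k * phi) phi) by auto.
    rewrite !RtoC_div by (try apply Rmult_integral_contrapositive; auto; lra).
    rewrite !RtoC_minus, RtoC_mult, RtoC_minus, !cos_C.
    rewrite <- (e_pow phi k). fold w. unfold ac. field. repeat split; auto. }
  set (PC := csum (fun j => (ac (RtoC M) w (S j) * z ^ (S j))%C) (N - 1)).
  assert (Hre : P_re N t = fst PC).
  { unfold PC. rewrite csum_fst. unfold P_re. apply sum_eq. intros j _.
    rewrite <- Hcoef. unfold z; rewrite e_pow. unfold e; simpl. ring. }
  assert (Him : P_im N t = snd PC).
  { unfold PC. rewrite csum_snd. unfold P_im. apply sum_eq. intros j _.
    rewrite <- Hcoef. unfold z; rewrite e_pow. unfold e; simpl. ring. }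
  assert (HPC : PC = F (RtoC M) w z (z ^ N) (/ (w * w)) (RtoC M - 2)).
  { unfold PC. rewrite closed_form by auto.
    replace (S (N - 1)) with N by lia.
    assert (HwN : (w ^ N)%C = (/ (w * w))%C).
    { assert (h : (w ^ N * (w * w))%C = 1%C).
      { replace (w ^ N * (w * w))%C with (w ^ (N + 2))%C by (rewrite Cpow_add_r; simpl; ring).
        unfold w; rewrite e_pow. replace (INR (N + 2) * phi) with (2 * PI).
        - apply Ceq; unfold e; simpl; [apply cos_2PI | apply sin_2PI].
        - rewrite plus_INR; unfold phi, M; simpl. field. pose proof (pos_INR N); lra. }
      transitivity (w ^ N * (w * w) / (w * w))%C; [field; auto|]. rewrite h. field. auto. }
    rewrite HwN. f_equal. unfold M. rewrite RtoC_plus. ring. }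
  set (Q := (sin t * sin (M * t) / 2, sin t * (1 - cos (M * t)) / 2) : C).
  assert (HQ : (- (z - / z) * (z ^ N * z * z - 1) / 4)%C = Q).
  { replace (z ^ N * z * z)%C with (e (M * t)).
    - unfold z. rewrite <- e_opp.
      assert (h4 : (- (e t - e (- t)) * (e (M * t) - 1))%C = (4 * Q)%C).
      { apply Ceq; unfold e, Q; simpl; rewrite cos_neg, sin_neg; field. }
      rewrite h4. field.
    - replace (z ^ N * z * z)%C with (z ^ (N + 2))%C by (rewrite Cpow_add_r; simpl; ring).
      unfold z; rewrite e_pow. f_equal. rewrite plus_INR. unfold M. simpl. ring. }
  set (Dr := 2 * / M * ((1 - c) * / (1 - cos t)) * / ((cos t - c) * (cos t - c))).
  assert (H2PC : (2 * PC)%C = (RtoC (/ (cos t - c)) + RtoC Dr * Q)%C).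
  { rewrite HPC, final_id by auto. rewrite HQ. unfold Dr.
    assert (HDD : (cos t - c) * (cos t - c) <> 0) by (apply Rmult_integral_contrapositive; auto).
    assert (HMr : M <> 0) by lra.
    rewrite !RtoC_mult, !RtoC_inv by auto. rewrite !RtoC_mult, !RtoC_minus.
    unfold c. fold phi. rewrite !cos_C. fold z w. reflexivity. }
  assert (E1 := f_equal fst H2PC). assert (E2 := f_equal snd H2PC).
  destruct (comps (/ (cos t - c)) Dr Q) as [C1 C2]. rewrite C1 in E1. rewrite C2 in E2.
  unfold Q in E1, E2. simpl in E1, E2.
  replace (M * t) with (2 * (M * t / 2)) in E1, E2 by field.
  rewrite sin_2a in E1. rewrite cos_2a_sin in E2.
  set (sh := sin (M * t / 2)) in *. set (ch := cos (M * t / 2)) in *.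
  assert (hc : ch * ch + sh * sh = 1).
  { pose proof (sin2_cos2 (M * t / 2)) as h. unfold Rsqr in h. fold sh ch in h. lra. }
  assert (HK : 2 / M * ((1 - c) / (1 - cos t)) * (sin t / (cos t - c) ^ 2) = Dr * sin t).
  { unfold Dr. field. repeat split; auto. lra. }
  rewrite HK. unfold P_abs2. rewrite Hre, Him.
  set (p := fst PC) in *. set (q := snd PC) in *.
  assert (hp : 2 * p = / (cos t - c) + Dr * sin t * sh * ch). { transitivity (2 * p - 0 * q); [ring| rewrite E1; field; auto]. }
  assert (hq : 2 * q = Dr * sin t * sh * sh) by (transitivity (2 * q + 0 * p); [ring| rewrite E2; field; auto]).
  replace (4 * (p ^ 2 + q ^ 2)) with ((2 * p) ^ 2 + (2 * q) ^ 2) by ring.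
  rewrite hp, hq. unfold Rdiv.
  set (iD := / (cos t - c)).
  match goal with |- ?L = ?R =>
    assert (Hdiff : L - R = (1 - (ch * ch + sh * sh)) * (iD ^ 2 - (Dr * sin t) ^ 2 * sh ^ 2)) by ring end.
  rewrite hc in Hdiff. lra.
Qed.
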